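(* Every two-directional orthogonal ray graph $G$ with given bipartition $(U,V)$ and without twins has at least one normalized representation.
   Context: All graphs are finite and simple. $G$ is a bipartite graph with a fixed bipartition $(U,V)$; $N(x)$ denotes the open neighborhood of $x$. Standing assumption: $G$ has no twins, i.e. no two distinct vertices $x\neq y$ with $N(x)=N(y)$. A representation of $G$ is a pair $(<_x,<_y)$ of linear orders on $V(G)$ such that for all $u\in U$ and $v\in V$: $uv\in E(G)$ iff ($u<_x v$ and $u<_y v$). $G$ is a two-directional orthogonal ray graph if it has a representation. A representation $(<_x,<_y)$ is normalized if: (a) for all $u_1,u_2\in U$: ($u_1<_x u_2$ and $u_1<_y u_2$) iff $N(u_1)\supsetneq N(u_2)$; (b) for all $v_1,v_2\in V$: ($v_1<_x v_2$ and $v_1<_y v_2$) iff $N(v_1)\subsetneq N(v_2)$; (c) for all $u\in U$, $v\in V$: ($v<_x u$ and $v<_y u$) iff for every $v'\in N(u)$, $N(v)\subsetneq N(v')$. *)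

(* Defs.v *)
From mathcomp Require Import all_boot.
Set Implicit Arguments. Unset Strict Implicit. Unset Printing Implicit Defensive.

Definition simple_graph (T : finType) (e : rel T) : Prop :=
  symmetric e /\ irreflexive e.

Definition bipartition (T : finType) (e : rel T) (U : {set T}) : Prop :=
  forall x y, e x y -> (x \in U) = (y \notin U).

Definition nbh (T : finType) (e : rel T) (x : T) : {set T} := [set y | e x y].

Definition twin_free (T : finType) (e : rel T) : Prop :=
  forall x y, x != y -> nbh e x != nbh e y.

Definition strict_linear_order (T : finType) (r : rel T) : Prop :=
  irreflexive r /\ transitive r /\ (forall x y, x != y -> r x y || r y x).

Definition representation (T : finType) (e : rel T) (U : {set T})
    (lx ly : rel T) : Prop :=
  strict_linear_order lx /\ strict_linear_order ly /\
  forall u v, u \in U -> v \in ~: U -> e u v = lx u v && ly u v.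

Definition two_directional_orthogonal_ray_graph (T : finType) (e : rel T)
    (U : {set T}) : Prop :=
  exists lx ly, representation e U lx ly.

Definition normalized (T : finType) (e : rel T) (U : {set T})
    (lx ly : rel T) : Prop :=
  representation e U lx ly /\
  (forall u1 u2, u1 \in U -> u2 \in U ->
     (lx u1 u2 && ly u1 u2) = (nbh e u2 \proper nbh e u1)) /\
  (forall v1 v2, v1 \in ~: U -> v2 \in ~: U ->
     (lx v1 v2 && ly v1 v2) = (nbh e v1 \proper nbh e v2)) /\
  (forall u v, u \in U -> v \in ~: U ->
     (lx v u && ly v u) <-> (forall v', v' \in nbh e u -> nbh e v \proper nbh e v')).

(* Main.v *)
Require Import Defs.
From mathcomp Require Import all_boot.
Set Implicit Arguments. Unset Strict Implicit. Unset Printing Implicit Defensive.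

Definition Prel (T : finType) (e : rel T) (U : {set T}) : rel T := fun a b =>
  if a \in U then (if b \in U then nbh e b \proper nbh e a else e a b)
  else (if b \in U then [forall v, (v \in nbh e b) ==> (nbh e a \proper nbh e v)]
        else nbh e a \proper nbh e b).

Definition Lrel (T : finType) (P O : rel T) : rel T := fun a b =>
  P a b || O a b && ~~ P b a.

Definition good (T : finType) (e : rel T) (U : {set T}) (O Q : rel T) :=
  symmetric e /\ irreflexive e /\ bipartition e U /\ twin_free e /\
  strict_linear_order O /\ strict_linear_order Q /\
  (forall u v, u \in U -> v \notin U -> e u v = O u v && Q u v).

Lemma good_swap (T : finType) e U (O Q : rel T) : good e U O Q -> good e U Q O.
Proof.
case=> Hs [Hi [Hb [Htf [HO [HQ Hr]]]]]; do 6 (split => //).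
by move=> u v Hu Hv; rewrite Hr // andbC.
Qed.

Lemma nbhE (T : finType) (e : rel T) x y : (y \in nbh e x) = e x y.
Proof. by rewrite inE. Qed.

Lemma sub_proper (T : finType) (e : rel T) a b : twin_free e ->
  (forall w, e a w -> e b w) -> a != b -> nbh e a \proper nbh e b.
Proof.
move=> Htf H ab; rewrite properEneq Htf //=.
by apply/subsetP => w; rewrite !nbhE; apply: H.
Qed.

Lemma side1 (T : finType) (e : rel T) U x y : bipartition e U -> e x y -> x \in U -> y \notin U.
Proof. by move=> Hb exy Hx; rewrite -(Hb _ _ exy). Qed.

Lemma side2 (T : finType) (e : rel T) U x y : bipartition e U -> e x y -> x \notin U -> y \in U.
Proof. by move=> Hb exy Hx; move: (Hb _ _ exy); rewrite (negbTE Hx) => /esym/negbFE. Qed.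

Lemma Ptrans (T : finType) (e : rel T) U : symmetric e -> transitive (Prel e U).
Proof.
move=> Hs b a c; rewrite /Prel.
case: (a \in U); case: (b \in U); case: (c \in U) => /=.
- by move=> h1 h2; exact: proper_trans h2 h1.
- by move=> /properP[/subsetP sub _] ebc; have := sub c; rewrite !nbhE; apply.
- move=> eab /forallP H; apply/properP; split.
    apply/subsetP => v; rewrite !nbhE => ecv.
    have := H v; rewrite nbhE ecv /= => /properP[/subsetP sub _].
    by have := sub a; rewrite !nbhE [e v a]Hs [e b a]Hs eab; apply.
  exists b; first by rewrite nbhE.
  apply/negP; rewrite nbhE => ecb.
  by have := H b; rewrite nbhE ecb properxx.
- move=> eab /properP[/subsetP sub _].
  by have := sub a; rewrite !nbhE [e c a]Hs [e b a]Hs eab; apply.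
- move=> /forallP H /properP[/subsetP sub _]; apply/forallP => v; apply/implyP => cv.
  by have /implyP := H v; apply; apply: sub.
- by move=> /forallP H ebc; have /implyP := H c; apply; rewrite nbhE.
- move=> h1 /forallP H; apply/forallP => v; apply/implyP => cv.
  by have /implyP/(_ cv) := H v; apply: proper_trans.
- by move=> h1 h2; exact: proper_trans h1 h2.
Qed.

Lemma Pirr (T : finType) (e : rel T) U : irreflexive (Prel e U).
Proof. by move=> a; rewrite /Prel; case: (a \in U); rewrite properxx. Qed.

Lemma D0P (T : finType) e U (O Q : rel T) : good e U O Q ->
  forall a b, O a b -> Q a b -> Prel e U a b.
Proof.
case=> Hs [Hi [Hb [Htf [[Oi [Ot Otot]] [[Qi [Qt Qtot]] Hr]]]]] a b Oab Qab.
have neqab : a != b by apply/eqP=> E; subst; rewrite Oi in Oab.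
rewrite /Prel; case: ifP => Ha; case: ifP => Hbb.
- apply: sub_proper => //; last by rewrite eq_sym.
  move=> v ebv; have Hv := side1 Hb ebv Hbb.
  move: ebv; rewrite !Hr // => /andP[O1 Q1].
  by rewrite (Ot _ _ _ Oab O1) (Qt _ _ _ Qab Q1).
- by rewrite Hr ?Oab ?Qab // Hbb.
- apply/forallP => v; apply/implyP; rewrite nbhE => ebv.
  have Hv := side1 Hb ebv Hbb.
  have [Obv Qbv] : O b v /\ Q b v by move: ebv; rewrite Hr // => /andP.
  apply: sub_proper => //.
    move=> u eau; have Hu := side2 Hb eau (negbT Ha).
    move: eau; rewrite Hs Hr ?Ha // => /andP[Oua Qua].
    rewrite Hs Hr //; apply/andP; split.
      by apply: (Ot _ _ _ _ Obv); apply: (Ot _ _ _ _ Oab).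
    by apply: (Qt _ _ _ _ Qbv); apply: (Qt _ _ _ _ Qab).
  apply/eqP => E; subst v.
  by have := Ot _ _ _ Oab Obv; rewrite Oi.
- apply: sub_proper => //.
  move=> u eau; have Hu := side2 Hb eau (negbT Ha).
  move: eau; rewrite Hs Hr ?Ha // => /andP[Oua Qua].
  rewrite Hs Hr ?Hbb //; apply/andP; split.
    by apply: (Ot _ _ _ _ Oab).
  by apply: (Qt _ _ _ _ Qab).
Qed.

Lemma prop_sub (T : finType) (e : rel T) a b w :
  nbh e a \proper nbh e b -> e a w -> e b w.
Proof. by move=> /properP[/subsetP s _] h; have := s w; rewrite !nbhE; apply. Qed.

Lemma all_at (T : finType) (e : rel T) (P : pred T) b v :
  [forall v, (v \in nbh e b) ==> P v] -> e b v -> P v.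
Proof. by move=> /forallP/(_ v)/implyP H ebv; apply: H; rewrite nbhE. Qed.

Lemma key (T : finType) e U (O Q : rel T) : good e U O Q ->
  forall x y z, Prel e U x y -> O y z -> O z x ->
  [|| Prel e U x z, Prel e U z x, Prel e U y z | Prel e U z y].
Proof.
move=> G; have D0 := D0P G.
case: G => Hs [Hi [Hb [Htf [[Oi [Ot Otot]] [[Qi [Qt Qtot]] Hr]]]]] x y z Pxy Oyz Ozx.
case Pxz: (Prel e U x z) => //; case Pzx: (Prel e U z x) => //.
case Pyz: (Prel e U y z) => //; case Pzy: (Prel e U z y) => //.
have nxz : x != z by apply/eqP => E; subst; rewrite Oi in Ozx.
have nyz : y != z by apply/eqP => E; subst; rewrite Oi in Oyz.
have Qxz : Q x z.
  by case/orP: (Qtot x z nxz) => // Qzx; rewrite (D0 _ _ Ozx Qzx) in Pzx.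
have Qzy : Q z y.
  have nzy : z != y by rewrite eq_sym.
  by case/orP: (Qtot z y nzy) => // Qyz; rewrite (D0 _ _ Oyz Qyz) in Pyz.
have Oyx : O y x := Ot _ _ _ Oyz Ozx.
have Eg : forall u v, u \in U -> v \notin U -> e u v -> O u v /\ Q u v.
  by move=> u v Hu Hv; rewrite Hr // => /andP.
have Eg' : forall u v, u \in U -> v \notin U -> e v u -> O u v /\ Q u v.
  by move=> u v Hu Hv; rewrite Hs; apply: Eg.
have gE : forall u v, u \in U -> v \notin U -> O u v -> Q u v -> e u v.
  by move=> u v Hu Hv Ouv Quv; rewrite Hr // Ouv Quv.
have gE' : forall u v, u \in U -> v \notin U -> O u v -> Q u v -> e v u.
  by move=> u v Hu Hv Ouv Quv; rewrite Hs; apply: gE.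
suff F : False by [].
move: Pxy Pxz Pzx Pyz Pzy; rewrite /Prel.
case: (boolP (x \in U)) => Hx; case: (boolP (y \in U)) => Hy;
  case: (boolP (z \in U)) => Hz /=.
- (* UUU *)
  move=> Pxy _ _ _ /negbT/negP; apply; apply: sub_proper => // v eyv.
  have Hv := side1 Hb eyv Hy.
  have exv := prop_sub Pxy eyv.
  have [Oyv Qyv] := Eg _ _ Hy Hv eyv; have [Oxv Qxv] := Eg _ _ Hx Hv exv.
  by apply: gE => //; [apply: (Ot _ _ _ Ozx Oxv) | apply: (Qt _ _ _ Qzy Qyv)].
- (* UUV *)
  move=> Pxy _ _ _ /negbT/negP; apply; apply/forallP => v; apply/implyP.
  rewrite nbhE => eyv; have Hv := side1 Hb eyv Hy.
  have exv := prop_sub Pxy eyv.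
  have [Oyv Qyv] := Eg _ _ Hy Hv eyv; have [Oxv Qxv] := Eg _ _ Hx Hv exv.
  apply: sub_proper => //.
    move=> u ezu; have Hu := side2 Hb ezu Hz.
    have [Ouz Quz] := Eg' _ _ Hu Hz ezu.
    apply: gE' => //; first exact: (Ot _ _ _ (Ot _ _ _ Ouz Ozx) Oxv).
    exact: (Qt _ _ _ (Qt _ _ _ Quz Qzy) Qyv).
  by apply/eqP => E; subst v; have := Qt _ _ _ Qzy Qyv; rewrite Qi.
- move=> Pxy; have [Oxy _] := Eg _ _ Hx Hy Pxy.
  by have := Ot _ _ _ Oxy Oyx; rewrite Oi.
- move=> Pxy; have [Oxy _] := Eg _ _ Hx Hy Pxy.
  by have := Ot _ _ _ Oxy Oyx; rewrite Oi.
- (* VUU *)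
  move=> Pxy /negbT/negP Pxz _ _ /negbT/negP Pzy.
  case: (boolP (nbh e y \subset nbh e z)) => sub.
    apply: Pzy; apply: sub_proper => //.
    by move=> w; move/subsetP: sub => /(_ w); rewrite !nbhE.
  move/subsetPn: sub => [v0]; rewrite !nbhE => eyv0 nzv0.
  have Hv0 := side1 Hb eyv0 Hy.
  have [Oyv0 Qyv0] := Eg _ _ Hy Hv0 eyv0.
  have Ov0z : O v0 z.
    have nzv : z != v0 by apply/eqP => E; subst; rewrite Hz in Hv0.
    case/orP: (Otot z v0 nzv) => // Ozv0.
    by move: nzv0; rewrite (gE _ _ Hz Hv0 Ozv0 (Qt _ _ _ Qzy Qyv0)).
  apply: Pxz; apply/forallP => v; apply/implyP; rewrite nbhE => ezv.
  have Hv := side1 Hb ezv Hz; have [Ozv Qzv] := Eg _ _ Hz Hv ezv.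
  apply: sub_proper => //.
    move=> u exu; have Hu := side2 Hb exu Hx.
    have [Oux Qux] := Eg' _ _ Hu Hx exu.
    have ev0u := prop_sub (all_at Pxy eyv0) exu.
    have [Ouv0 _] := Eg' _ _ Hu Hv0 ev0u.
    apply: gE' => //; first exact: (Ot _ _ _ (Ot _ _ _ Ouv0 Ov0z) Ozv).
    exact: (Qt _ _ _ (Qt _ _ _ Qux Qxz) Qzv).
  by apply/eqP => E; subst v; have := Qt _ _ _ Qzv Qxz; rewrite Qi.
- (* VUV *)
  move=> Pxy /negbT/negP Pxz _ _ /negbT/negP Pzy.
  case: (boolP (nbh e x \subset nbh e z)) => sub.
    apply: Pxz; apply: sub_proper => //.
    by move=> w; move/subsetP: sub => /(_ w); rewrite !nbhE.
  move/subsetPn: sub => [u0]; rewrite !nbhE => exu0 nzu0.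
  have Hu0 := side2 Hb exu0 Hx.
  have [Ou0x Qu0x] := Eg' _ _ Hu0 Hx exu0.
  have Ozu0 : O z u0.
    have nzu : u0 != z by apply/eqP => E; subst; rewrite Hu0 in Hz.
    case/orP: (Otot u0 z nzu) => // Ou0z.
    by move: nzu0; rewrite (gE' _ _ Hu0 Hz Ou0z (Qt _ _ _ Qu0x Qxz)).
  apply: Pzy; apply/forallP => v; apply/implyP; rewrite nbhE => eyv.
  have Hv := side1 Hb eyv Hy; have [Oyv Qyv] := Eg _ _ Hy Hv eyv.
  have ev0u := prop_sub (all_at Pxy eyv) exu0.
  have [Ou0v _] := Eg' _ _ Hu0 Hv ev0u.
  apply: sub_proper => //.
    move=> u ezu; have Hu := side2 Hb ezu Hz.
    have [Ouz Quz] := Eg' _ _ Hu Hz ezu.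
    apply: gE' => //; first exact: (Ot _ _ _ (Ot _ _ _ Ouz Ozu0) Ou0v).
    exact: (Qt _ _ _ (Qt _ _ _ Quz Qzy) Qyv).
  by apply/eqP => E; subst v; have := Qt _ _ _ Qzy Qyv; rewrite Qi.
- (* VVU *)
  move=> Pxy /negbT/negP H _ _ _; apply: H; apply/forallP => v; apply/implyP.
  rewrite nbhE => ezv; have Hv := side1 Hb ezv Hz.
  have [Ozv Qzv] := Eg _ _ Hz Hv ezv.
  apply: sub_proper => //.
    move=> u exu; have Hu := side2 Hb exu Hx.
    have [Oux Qux] := Eg' _ _ Hu Hx exu.
    have [Ouy _] := Eg' _ _ Hu Hy (prop_sub Pxy exu).
    apply: gE' => //; first exact: (Ot _ _ _ (Ot _ _ _ Ouy Oyz) Ozv).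
    exact: (Qt _ _ _ (Qt _ _ _ Qux Qxz) Qzv).
  by apply/eqP => E; subst v; have := Qt _ _ _ Qzv Qxz; rewrite Qi.
- (* VVV *)
  move=> Pxy /negbT/negP H _ _ _; apply: H; apply: sub_proper => // u exu.
  have Hu := side2 Hb exu Hx.
  have [Oux Qux] := Eg' _ _ Hu Hx exu.
  have [Ouy _] := Eg' _ _ Hu Hy (prop_sub Pxy exu).
  apply: gE' => //; first exact: (Ot _ _ _ Ouy Oyz).
  exact: (Qt _ _ _ Qux Qxz).
Qed.

Lemma Ltrans (T : finType) e U (O Q : rel T) : good e U O Q ->
  transitive (Lrel (Prel e U) O).
Proof.
move=> G; have K := key G.
case: G => Hs [_ [_ [_ [[Oi [Ot Otot]] _]]]].
have Pt := @Ptrans _ e U Hs.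
set P := Prel e U in K Pt *.
move=> b a c /orP[Pab|/andP[Oab nPba]] /orP[Pbc|/andP[Obc nPcb]]; rewrite /Lrel.
- by rewrite (Pt _ _ _ Pab Pbc).
- case Pac: (P a c) => //=.
  have nPca : P c a = false.
    by apply/negbTE/negP => Pca; rewrite (Pt _ _ _ Pca Pab) in nPcb.
  rewrite nPca andbT.
  have nac : a != c by apply/eqP => E; subst; rewrite Pab in nPcb.
  case/orP: (Otot a c nac) => // Oca.
  have nPbc : P b c = false.
    by apply/negbTE/negP => Pbc; rewrite (Pt _ _ _ Pab Pbc) in Pac.
  by have := K a b c Pab Obc Oca; rewrite Pac nPca nPbc (negbTE nPcb).
- case Pac: (P a c) => //=.
  have nPca : P c a = false.
    by apply/negbTE/negP => Pca; rewrite (Pt _ _ _ Pbc Pca) in nPba.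
  rewrite nPca andbT.
  have nac : a != c by apply/eqP => E; subst; rewrite Pbc in nPba.
  case/orP: (Otot a c nac) => // Oca.
  have nPab : P a b = false.
    by apply/negbTE/negP => Pab; rewrite (Pt _ _ _ Pab Pbc) in Pac.
  by have := K b c a Pbc Oca Oab; rewrite Pac nPca nPab (negbTE nPba).
- case Pac: (P a c) => //=.
  rewrite (Ot _ _ _ Oab Obc) /=; apply/negP => Pca.
  have nPbc : P b c = false.
    by apply/negbTE/negP => Pbc; rewrite (Pt _ _ _ Pbc Pca) in nPba.
  have nPab : P a b = false.
    by apply/negbTE/negP => Pab; rewrite (Pt _ _ _ Pca Pab) in nPcb.
  by have := K c a b Pca Oab Obc; rewrite nPbc nPab (negbTE nPba) (negbTE nPcb).
Qed.

Lemma Lslo (T : finType) e U (O Q : rel T) : good e U O Q ->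
  strict_linear_order (Lrel (Prel e U) O).
Proof.
move=> G; have Lt := Ltrans G.
case: G => Hs [_ [_ [_ [[Oi [Ot Otot]] _]]]].
split; [|split] => //.
  by move=> a; rewrite /Lrel Pirr Oi.
move=> x y nxy; rewrite /Lrel.
case Pxy: (Prel e U x y) => //=; case Pyx: (Prel e U y x) => /=.
  by rewrite orbT.
by rewrite !andbT Otot.
Qed.

Lemma LL (T : finType) e U (O Q : rel T) : good e U O Q ->
  forall a b, (Lrel (Prel e U) O a b && Lrel (Prel e U) Q a b) = Prel e U a b.
Proof.
move=> G a b; have D0 := D0P G; rewrite /Lrel.
case Pab: (Prel e U a b) => //=.
apply/negbTE/negP => /andP[/andP[Oab _] /andP[Qab _]].
by rewrite (D0 _ _ Oab Qab) in Pab.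
Qed.

Theorem mainTheorem2 (T : finType) (e : rel T) (U : {set T}) :
  simple_graph e -> bipartition e U -> twin_free e ->
  two_directional_orthogonal_ray_graph e U ->
  exists lx ly : rel T, normalized e U lx ly.
Proof.
move=> [Hs Hi] Hb Htf [lx [ly [Hx [Hy Hr]]]].
have G : good e U lx ly.
  do 6 (split => //).
  by move=> u v Hu Hv; apply: Hr; rewrite // inE.
have G' := good_swap G.
exists (Lrel (Prel e U) lx), (Lrel (Prel e U) ly).
have L2 := LL G.
split; [split; [exact: Lslo G | split; [exact: Lslo G' |]] |].
  move=> u v Hu; rewrite inE => Hv.
  by rewrite L2 /Prel Hu (negbTE Hv).
split; [|split].
- by move=> u1 u2 H1 H2; rewrite L2 /Prel H1 H2.
- by move=> v1 v2; rewrite !inE => H1 H2; rewrite L2 /Prel (negbTE H1) (negbTE H2).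
- move=> u v Hu; rewrite inE => Hv; rewrite L2 /Prel Hu (negbTE Hv).
  split.
    by move=> /forallP H v' Hv'; have /implyP := H v'; apply.
  by move=> H; apply/forallP => v'; apply/implyP; apply: H.
Qed.
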